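(* Let $\mathcal X,\mathcal U$ be finite nonempty sets, $f:\mathcal X\times\mathcal U\to\mathcal X$ and $\ell,g:\mathcal X\to\mathbb R$. Let $V_{\mathrm A}^*(x)=\max_{\pi\in\Pi}\min_{\tau\in\mathbb N}g(\xi_x^\pi(\tau))$, $\tilde\ell(x)=\min\{\ell(x),V_{\mathrm A}^*(x)\}$, and $$\tilde v_{\mathrm{RA}}^*(x)=\max_{\mathbf u\in\mathbb U}\max_{\tau\in\mathbb N}\min\Big\{\tilde\ell(\xi_x^{\mathbf u}(\tau)),\min_{\kappa\le\tau}g(\xi_x^{\mathbf u}(\kappa))\Big\}.$$ Then there is a policy $\pi\in\Pi$ such that for all $x\in\mathcal X$, $$\tilde v_{\mathrm{RA}}^*(x)=\max_{\tau\in\mathbb N}\min\Big\{\tilde\ell(\xi_x^\pi(\tau)),\min_{\kappa\le\tau}g(\xi_x^\pi(\kappa))\Big\}.$$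
   Context: $\mathbb N=\{0,1,\dots\}$; $\Pi$ is the set of maps $\mathcal X\to\mathcal U$; $\mathbb U$ is the set of sequences $\mathbb N\to\mathcal U$. For $\pi\in\Pi$: $\xi_x^\pi(0)=x$, $\xi_x^\pi(t+1)=f(\xi_x^\pi(t),\pi(\xi_x^\pi(t)))$. For $\mathbf u\in\mathbb U$: $\xi_x^{\mathbf u}(0)=x$, $\xi_x^{\mathbf u}(t+1)=f(\xi_x^{\mathbf u}(t),\mathbf u(t))$. *)

(* Defs.v *)
From mathcomp Require Import all_boot all_order all_algebra.
From mathcomp Require Import boolp classical_sets reals.
Set Implicit Arguments. Unset Strict Implicit. Unset Printing Implicit Defensive.
Import Order.TTheory GRing.Theory Num.Theory.
Local Open Scope ring_scope.
Local Open Scope classical_set_scope.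

Section Defs.
Variables (X U : finType) (f : X -> U -> X).

Fixpoint traj_pi (pi : X -> U) (x : X) (t : nat) : X :=
  match t with
  | 0 => x
  | t'.+1 => let y := traj_pi pi x t' in f y (pi y)
  end.

Fixpoint traj_u (u : nat -> U) (x : X) (t : nat) : X :=
  match t with
  | 0 => x
  | t'.+1 => let y := traj_u u x t' in f y (u t')
  end.

Variable R : realType.
Variables (ell g : X -> R).

Definition VA (x : X) : R :=
  sup [set inf (range (fun t => g (traj_pi pi x t))) | pi in [set: X -> U]].

Definition ell_t (x : X) : R := Num.min (ell x) (VA x).

Definition ra_payoff (xi : nat -> X) : R :=
  sup (range (fun tau : nat =>
    Num.min (ell_t (xi tau)) (inf [set g (xi k) | k in [set k : nat | (k <= tau)%N]]))).

Definition vRA (x : X) : R :=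
  sup [set ra_payoff (traj_u u x) | u in [set: nat -> U]].

End Defs.

(* Main.v *)
Require Import Defs.
From mathcomp Require Import all_boot all_order all_algebra.
From mathcomp Require Import boolp classical_sets reals.
Set Implicit Arguments. Unset Strict Implicit. Unset Printing Implicit Defensive.
Import Order.TTheory GRing.Theory Num.Theory.
Local Open Scope ring_scope.
Local Open Scope classical_set_scope.

Lemma traj_u_shift (X U : finType) (f : X -> U -> X) (u : nat -> U) x k :
  traj_u f u x k.+1 = traj_u f (fun t => u t.+1) (f x (u 0%N)) k.
Proof. by elim: k => [|k IH] //; rewrite /= -IH. Qed.

Lemma traj_pi_shift (X U : finType) (f : X -> U -> X) (pi : X -> U) x k :
  traj_pi f pi x k.+1 = traj_pi f pi (f x (pi x)) k.
Proof. by elim: k => [|k IH] //; rewrite /= -IH. Qed.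

Lemma traj_u_pi (X U : finType) (f : X -> U -> X) (pi : X -> U) x k :
  traj_u f (fun t => pi (traj_pi f pi x t)) x k = traj_pi f pi x k.
Proof. by elim: k => [|k IH] //; rewrite /= IH. Qed.

Lemma lex_ind (P : nat -> nat -> Prop) :
  (forall a b, (forall a' b', (a' < a)%N -> P a' b') ->
     (forall b', (b' < b)%N -> P a b') -> P a b) -> forall a b, P a b.
Proof.
move=> H a; elim/ltn_ind: a => a IHa b; elim/ltn_ind: b => b IHb.
by apply: H => [a' b' /IHa|b' /IHb].
Qed.

Lemma fin_bound (X : finType) (R : realType) (F : X -> R) :
  exists B, forall z, F z <= B.
Proof.
exists (\sum_z `|F z|) => z.
rewrite (bigD1 z) //= -[X in X <= _]addr0; apply: lerD; first exact: ler_norm.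
by apply: sumr_ge0 => i _.
Qed.

Lemma argmin_prefix (R : realType) (G : nat -> R) n :
  exists2 k, (k <= n)%N & forall j, (j <= n)%N -> G k <= G j.
Proof.
elim: n => [|n [k kn Hk]].
  by exists 0%N => // j; rewrite leqn0 => /eqP ->.
case: (leP (G k) (G n.+1)) => H.
  exists k; first exact: leqW.
  move=> j; rewrite leq_eqVlt => /orP [/eqP -> //| ]; rewrite ltnS; exact: Hk.
exists n.+1 => // j; rewrite leq_eqVlt => /orP [/eqP -> //| ]; rewrite ltnS.
move=> /Hk; exact/le_trans/ltW.
Qed.

Definition reach (X U : finType) (f : X -> U -> X) (R : realType) (h g : X -> R)
  (c : R) (x : X) (n : nat) :=
  exists u : nat -> U, c <= h (traj_u f u x n) /\
    forall k, (k <= n)%N -> c <= g (traj_u f u x k).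

Lemma foldr_max (R : realType) (P : R -> bool) (Q : R -> Prop) (S : seq R) m0 :
  Q m0 -> (forall s, P s -> Q s) ->
  let v := foldr (fun s acc => if P s then Num.max s acc else acc) m0 S in
  Q v /\ (forall s, s \in S -> P s -> s <= v).
Proof.
move=> Q0 QP; elim: S => [|s S [IH1 IH2]] /=; first by split.
case: ifP => Ps; split.
- by case: leP => _; auto.
- move=> t; rewrite inE => /orP [/eqP -> _|tS Pt]; first by rewrite le_max lexx.
  by rewrite le_max (IH2 t tS Pt) orbT.
- by [].
- move=> t; rewrite inE => /orP [/eqP -> Pt|tS Pt]; first by rewrite Pt in Ps.
  exact: IH2.
Qed.

Lemma value_exists (X U : finType) (f : X -> U -> X) (R : realType) (h g : X -> R)
  (u0 : U) (x : X) :
  exists v, (exists n, reach f h g v x n) /\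
    forall c n, reach f h g c x n -> c <= v.
Proof.
pose S := map h (enum X) ++ map g (enum X).
have Q0 : exists n, reach f h g (Num.min (h x) (g x)) x n.
  exists 0%N, (fun _ => u0); split => /=; first by rewrite ge_min lexx.
  by move=> k; rewrite leqn0 => /eqP -> /=; rewrite ge_min lexx orbT.
have [Qv Hv] := @foldr_max R (fun s => `[< exists n, reach f h g s x n >])
  (fun s => exists n, reach f h g s x n) S _ Q0 (fun s => @asboolW _).
eexists; split; first exact: Qv.
move=> c n [u [Hh Hg]].
have [k kn Hk] := argmin_prefix (fun j => g (traj_u f u x j)) n.
pose s := Num.min (h (traj_u f u x n)) (g (traj_u f u x k)).
have rs : reach f h g s x n.
  exists u; split; first by rewrite ge_min lexx.
  by move=> j jn; apply: le_trans (Hk j jn); rewrite ge_min lexx orbT.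
have sS : s \in S.
  by rewrite /s; case: leP => _; rewrite mem_cat map_f ?mem_enum ?orbT.
have cs : c <= s by rewrite le_min Hh Hg.
apply: le_trans cs (Hv s sS _); apply/asboolP; by exists n.
Qed.

Lemma stationary (X U : finType) (f : X -> U -> X) (R : realType) (h g : X -> R)
  (u0 : U) :
  exists pi : X -> U, forall x c n, reach f h g c x n ->
    exists t, c <= h (traj_pi f pi x t) /\
      forall j, (j <= t)%N -> c <= g (traj_pi f pi x j).
Proof.
have [V HV] := choice (fun x => value_exists f h g u0 x).
have HW : forall x, exists p : (nat -> U) * nat,
    [/\ V x <= h (traj_u f p.1 x p.2),
        (forall k, (k <= p.2)%N -> V x <= g (traj_u f p.1 x k)) &
        forall m, reach f h g (V x) x m -> (p.2 <= m)%N].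
  move=> x; have [ex _] := HV x.
  have ex' : exists n, `[< reach f h g (V x) x n >].
    by case: ex => n rn; exists n; apply/asboolP.
  case: (ex_minnP ex') => n /asboolP [u [H1 H2]] Hmin.
  by exists (u, n); split => // m rm; apply: Hmin; apply/asboolP.
have [W HW'] := choice HW.
pose pi x := (W x).1 0%N.
exists pi.
pose A x := finset (fun z => V x < V z).
suff key : forall a b x, #|A x| = a -> (W x).2 = b -> forall c, c <= V x ->
    exists t, c <= h (traj_pi f pi x t) /\
      forall j, (j <= t)%N -> c <= g (traj_pi f pi x j).
  by move=> x c n rn; apply: (key _ _ x erefl erefl); exact: (HV x).2 c n rn.
apply: lex_ind => a b IHa IHb x Ha Hb c cV.
case: (HW' x) => Hh Hg Hmin.
have pix : pi x = (W x).1 0%N by [].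
move: Hh Hg Hmin Hb pix; case: (W x) => u n /= Hh Hg Hmin Hb pix.
case: n Hh Hg Hmin Hb => [|m] Hh Hg Hmin Hb.
  exists 0%N; split; first exact: (le_trans cV Hh).
  by move=> j; rewrite leqn0 => /eqP ->; exact: (le_trans cV (Hg 0%N isT)).
pose y := f x (u 0%N).
have gx : V x <= g x := Hg 0%N isT.
have ry : reach f h g (V x) y m.
  exists (fun t => u t.+1); split; first by rewrite -traj_u_shift.
  by move=> k km; rewrite -traj_u_shift; apply: Hg.
have Vxy : V x <= V y := (HV y).2 _ _ ry.
have Gy : forall c, c <= V y -> exists t, c <= h (traj_pi f pi y t) /\
      forall j, (j <= t)%N -> c <= g (traj_pi f pi y j).
  move: Vxy; rewrite le_eqVlt => /orP [/eqP Exy | Lxy].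
    case: (HW' y) => _ _ Hminy.
    apply: (IHb (W y).2) => //.
      by rewrite -Hb ltnS; apply: Hminy; rewrite -Exy.
    by rewrite -Ha; apply: eq_card => z; rewrite !inE Exy.
  apply: (IHa #|A y|) => //; rewrite -Ha; apply: proper_card; apply/properP; split.
    by apply/fintype.subsetP => z; rewrite !inE => /(lt_trans Lxy).
  by exists y; rewrite !inE ?Lxy ?ltxx.
have [t [Ht1 Ht2]] := Gy c (le_trans cV Vxy).
exists t.+1; split; first by rewrite traj_pi_shift pix.
case=> [|j] jt; first exact: le_trans cV gx.
by rewrite traj_pi_shift pix; apply: Ht2.
Qed.

Theorem mainTheorem5 (X U : finType) (hX : inhabited X) (hU : inhabited U)
  (f : X -> U -> X) (R : realType) (ell g : X -> R) :
  exists pi : X -> U, forall x : X,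
    vRA f ell g x = ra_payoff f ell g (traj_pi f pi x).
Proof.
case: hU => u0.
pose h := ell_t f ell g.
have [pi Hpi] := stationary f h g u0.
exists pi => x.
have [Bh HBh] := fin_bound h.
have [Bg HBg] := fin_bound (fun z => - g z).
have lbG : forall (xi : nat -> X) tau,
    has_lbound [set g (xi k) | k in [set k : nat | (k <= tau)%N]].
  by move=> xi tau; exists (- Bg) => _ [k _ <-]; rewrite lerNl; exact: HBg.
have neG : forall (xi : nat -> X) tau,
    [set g (xi k) | k in [set k : nat | (k <= tau)%N]] !=set0.
  by move=> xi tau; exists (g (xi 0%N)); exists 0%N.
have ubM : forall xi : nat -> X, has_ubound (range (fun tau : nat =>
    Num.min (h (xi tau)) (inf [set g (xi k) | k in [set k : nat | (k <= tau)%N]]))).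
  move=> xi; exists Bh => _ [t _ <-]; apply: le_trans (HBh (xi t)).
  by rewrite ge_min lexx.
have payB : forall xi, ra_payoff f ell g xi <= Bh.
  move=> xi; apply: ge_sup.
    by eexists; exists 0%N.
  move=> _ [t _ <-]; apply: le_trans (HBh (xi t)).
  by rewrite ge_min lexx.
rewrite /vRA; apply/eqP; rewrite eq_le; apply/andP; split.
  apply: ge_sup.
    by exists (ra_payoff f ell g (traj_u f (fun _ => u0) x)); exists (fun _ => u0).
  move=> _ [u _ <-]; apply: ge_sup; first by eexists; exists 0%N.
  move=> _ [tau _ <-].
  set c := Num.min _ _.
  have rc : reach f h g c x tau.
    exists u; split; first by rewrite /c ge_min lexx.
    move=> k kt; apply: le_trans (_ : c <= inf [set g (traj_u f u x k0) |
      k0 in [set k0 : nat | (k0 <= tau)%N]]) _.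
      by rewrite /c ge_min lexx orbT.
    by apply: ge_inf; [exact: lbG | exists k].
  have [t [Ht1 Ht2]] := Hpi x c tau rc.
  rewrite /ra_payoff; have Hle := ub_le_sup (ubM (traj_pi f pi x)).
  have Hm : c <= Num.min (h (traj_pi f pi x t))
      (inf [set g (traj_pi f pi x k) | k in [set k : nat | (k <= t)%N]]).
    rewrite le_min Ht1 /=; apply: lb_le_inf; first exact: neG.
    by move=> _ [k kt <-]; exact: Ht2.
  apply: le_trans Hm (Hle _ _); by exists t.
have -> : traj_pi f pi x = traj_u f (fun t => pi (traj_pi f pi x t)) x.
  by apply: funext => k; rewrite traj_u_pi.
apply: ub_le_sup; last by exists (fun t => pi (traj_pi f pi x t)).
by exists Bh => _ [u _ <-]; exact: payB.
Qed.
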